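(* For all integers $n\ge2$ and $k\ge1$: (a) the eccentricity of the root $\mathbf r=00\ldots0$ in $H_{n,k}$ equals $k$, and the radius of $H_{n,k}$ equals $k$; (b) the diameter of $H_{n,k}$ equals $2k-1$.
   Context: Let $n\ge 2$ and $k\ge 1$ be integers. $H_{n,k}$ is the simple undirected graph with vertex set $V_{n,k}=\mathbb{Z}_n^k$ (so $|V_{n,k}|=n^k$), whose vertices are written as strings $x_1x_2\ldots x_k$ with $x_j\in\mathbb{Z}_n=\{0,1,\ldots,n-1\}$. Two distinct vertices are adjacent if and only if they are related by one of the following rules. For $i=0$ the prefix $x_1\ldots x_i$ is empty, and ''$0\ldots0$'' denotes a string of zeros completing the word to length $k$. (R1) $x_1\ldots x_{k-1}x_k\sim x_1\ldots x_{k-1}y_k$ whenever $y_k\neq x_k$. (R2) For $0\le i\le k-2$: $x_1\ldots x_i0\ldots0\sim x_1\ldots x_ix_{i+1}\ldots x_k$ whenever $x_j\neq 0$ for all $i+1\le j\le k$. (R3) For $1\le i\le k-1$: $x_1\ldots x_{i-1}x_i0\ldots0\sim x_1\ldots x_{i-1}y_i0\ldots0$ whenever $x_i,y_i\neq0$ and $x_i\ne y_i$. In particular, $H_{n,1}$ is the complete graph $K_n$. The root of $H_{n,k}$ is the vertex $\mathbf r=00\ldots0$. The eccentricity of a vertex is its maximum distance to the other vertices; the radius (resp. diameter) is the minimum (resp. maximum) eccentricity. *)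

(* Defs.v *)
From mathcomp Require Import all_boot.
Set Implicit Arguments. Unset Strict Implicit. Unset Printing Implicit Defensive.

Section GraphDist.
Variable T : finType.
Variable e : rel T.

Definition walkb (m : nat) (x y : T) : bool :=
  [exists p : m.-tuple T, path e x p && (last x p == y)].

(* graph distance: the least m admitting a walk of length m
   (a shortest walk has fewer than #|T| edges; if y is unreachable the
   value is #|T|, which never occurs for the connected graphs below) *)
Definition gdist (x y : T) : nat := find (fun m => walkb m x y) (iota 0 #|T|).

Definition ecc (x : T) : nat := \max_(y : T) gdist x y.
Definition radius : nat := \big[minn/#|T|]_(x : T) ecc x.
Definition diameter : nat := \max_(x : T) ecc x.
End GraphDist.

(* ---------- the graph H_{n,k} ----------
   A vertex x_1...x_k is a k-tuple over 'I_n (coordinate x_j is at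
   position j-1).  Rules are stated on the underlying seq nat. *)

Definition R1 (k : nat) (u v : seq nat) : bool :=
  take k.-1 u == take k.-1 v.

Definition R2 (k : nat) (u v : seq nat) : bool :=
  [exists i : 'I_k.-1,
     (u == take i v ++ nseq (k - i) 0) && all (fun a => a != 0) (drop i v)].

(* (R3) u = x_1..x_{i-1} x_i 0..0, v = x_1..x_{i-1} y_i 0..0,
   x_i, y_i <> 0, x_i <> y_i, for some 1 <= i <= k-1 *)
Definition R3 (k : nat) (u v : seq nat) : bool :=
  [exists i : 'I_k,
     [&& 0 < (i : nat),
         take i.-1 u == take i.-1 v,
         nth 0 u i.-1 != 0, nth 0 v i.-1 != 0, nth 0 u i.-1 != nth 0 v i.-1,
         drop i u == nseq (k - i) 0 & drop i v == nseq (k - i) 0]].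

Definition Hadj (n k : nat) : rel (k.-tuple 'I_n) :=
  fun x y =>
    let u := map val x in let v := map val y in
    (x != y) && [|| R1 k u v, R2 k u v, R2 k v u | R3 k u v].
Arguments Hadj n k : clear implicits.

(* Main.v *)
Require Import Defs.
From mathcomp Require Import all_boot zify.
Set Implicit Arguments. Unset Strict Implicit. Unset Printing Implicit Defensive.

Section G.
Variables (T : finType) (e : rel T).

Lemma walkbP m x y :
  reflect (exists p : seq T, [/\ size p = m, path e x p & last x p = y]) (walkb e m x y).
Proof.
apply: (iffP existsP) => [[p /andP[H1 /eqP H2]]|[p [Hs H1 H2]]].
  by exists p; rewrite size_tuple.
have Hs' : size p == m by rewrite Hs.
by exists (Tuple Hs'); rewrite /= H1 H2 eqxx.
Qed.

Lemma gdist_le j x y : j < #|T| -> walkb e j x y -> gdist e x y <= j.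
Proof.
move=> Hj Hw; rewrite leqNgt; apply/negP => Hlt.
have := before_find 0 Hlt; rewrite nth_iota // add0n Hw //.
Qed.

Lemma gdist_ge B x y : B <= #|T| -> (forall j, walkb e j x y -> B <= j) -> B <= gdist e x y.
Proof.
move=> HB H; rewrite /gdist.
case: (boolP (has (fun m => walkb e m x y) (iota 0 #|T|))) => Hh.
  have := nth_find 0 Hh; rewrite nth_iota; last by move: Hh; rewrite has_find size_iota.
  by rewrite add0n; apply: H.
by rewrite hasNfind // size_iota.
Qed.
End G.

Definition Ad k (u v : seq nat) := (u != v) && [|| R1 k u v, R2 k u v, R2 k v u | R3 k u v].

Lemma Ad_sym k u v : Ad k u v = Ad k v u.
Proof.
rewrite /Ad eq_sym; congr (_ && _).
have -> : R1 k u v = R1 k v u by rewrite /R1 eq_sym.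
have -> : R3 k u v = R3 k v u.
  by apply/existsP/existsP => -[i /and5P[H1 H2 H3 H4 /and3P[H5 H6 H7]]]; exists i;
   rewrite H1 /= eq_sym H2 H3 H4 eq_sym H5 H6 H7.
by case: (R1 _ _ _) (R2 k u v) (R2 k v u) (R3 _ _ _) => [] [] [] [].
Qed.

Lemma Ad_fill k p t : size p + size t = k -> 0 < size t -> all (fun a => a != 0) t ->
  Ad k (p ++ nseq (size t) 0) (p ++ t).
Proof.
move=> Hk Ht Hall; apply/andP; split.
  apply/negP => /eqP /(congr1 (drop (size p))); rewrite !drop_size_cat //.
  case: t Hk Ht Hall => [|a t] //= _ _ /andP[Ha _] [] /esym/eqP; by rewrite (negPf Ha).
case: (ltnP 1 (size t)) => H.
  apply/or4P; apply: Or42; apply/existsP.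
  have Hi : size p < k.-1 by lia.
  exists (Ordinal Hi) => /=; rewrite take_size_cat // drop_size_cat // Hall andbT.
  by have -> : k - size p = size t by lia.
apply/or4P; apply: Or41; rewrite /R1.
have -> : k.-1 = size p by lia.
by rewrite !take_size_cat.
Qed.

Lemma Ad_R3 k a b : a != 0 -> b != 0 -> a != b -> 0 < k ->
  Ad k (a :: nseq k.-1 0) (b :: nseq k.-1 0).
Proof.
move=> Ha Hb Hab Hk; apply/andP; split.
  by apply/negP => /eqP [] /eqP; rewrite (negPf Hab).
case: k Hk => [|[|k]] // _.
apply/or4P; apply: Or44; apply/existsP; exists (Ordinal (isT : 1 < k.+2)) => /=.
by rewrite Ha Hb Hab /= eqxx.
Qed.

Section SW.
Variables (n k : nat).
Hypothesis hn : 1 < n.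

Definition valid (u : seq nat) := (size u == k) && all (fun a => a < n) u.
Definition sw m a b := exists s, [/\ size s <= m, path (Ad k) a s, last a s = b & all valid s].

Lemma sw_refl a : sw 0 a a.
Proof. by exists [::]. Qed.

Lemma sw_edge a b : Ad k a b -> valid b -> sw 1 a b.
Proof. by move=> H Hb; exists [:: b]; rewrite /= H Hb. Qed.

Lemma sw_mono m m' a b : m <= m' -> sw m a b -> sw m' a b.
Proof. by move=> Hm [s [H1 H2 H3 H4]]; exists s; split => //; apply: leq_trans Hm. Qed.

Lemma sw_trans m m' a b c : sw m a b -> sw m' b c -> sw (m + m') a c.
Proof.
move=> [s [H1 H2 H3 H4]] [s' [H1' H2' H3' H4']]; exists (s ++ s'); split.
- by rewrite size_cat leq_add.
- by rewrite cat_path H2 H3 H2'.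
- by rewrite last_cat H3.
- by rewrite all_cat H4 H4'.
Qed.

Lemma sw_sym m a b : valid a -> sw m a b -> sw m b a.
Proof.
move=> Ha [s [H1 H2 H3 H4]]; exists (rev (belast a s)); split.
- by rewrite size_rev size_belast.
- rewrite -H3 rev_path (@eq_path _ _ (Ad k)) // => x y /=; exact: Ad_sym.
- rewrite -H3; case: s {H1 H2 H3 H4} => [|x s] //=.
  by rewrite rev_cons last_rcons.
- rewrite all_rev; apply/allP => x /mem_belast; rewrite inE => /orP[/eqP -> //|].
  by move/allP: H4; apply.
Qed.

Lemma fill_walk L : forall p w, size p + L = k -> size w = L ->
  all (fun a => a < n) p -> all (fun a => a < n) w ->
  sw L (p ++ nseq L 0) (p ++ w).
Proof.
elim/ltn_ind: L => L IH p w Hk Hw Hp Hwn.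
case: w Hw Hwn => [|c w'] Hw Hwn.
  by rewrite -Hw cats0; exact: sw_refl.
have Hn0 : 0 < n by apply: ltn_trans hn.
case: (eqVneq c 0) => Hc.
  subst c; rewrite -Hw /= -cat_rcons -[_ :: w']cat1s catA cats1.
  apply: (sw_mono (m := size w')); first by [].
  move: Hwn => /= /andP[_ Hw'].
  apply: IH => //; first by rewrite -Hw.
  - by rewrite size_rcons; move: Hw => /= Hw; lia.
  - by rewrite all_rcons Hn0.
case: (boolP (has (pred1 0) (c :: w'))) => Hh; last first.
  apply: (sw_mono (m := 1)); first by rewrite -Hw.
  apply: sw_edge.
    rewrite -[L]Hw; apply: Ad_fill => //; first by rewrite Hw.
    by move: Hh; rewrite -all_predC.
  by rewrite /valid size_cat Hw Hk eqxx all_cat Hp Hwn.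
have Hhead : head 0 (c :: w') != 0 by [].
move: Hw Hwn Hhead; case: (split_find_nth 0 Hh) => z u w3 /eqP -> Hu.
move=> Hw Hwn Hhead.
have Hu0 : 0 < size u by case: u Hu Hw Hwn Hhead {IH}.
have HL : L = size u + (size w3).+1 by rewrite -Hw size_cat size_rcons addSnnS.
move: Hwn; rewrite all_cat all_rcons => /andP[/andP[_ Hun] Hw3].
have Hun0 : all (fun a => a != 0) u by move: Hu; rewrite -all_predC.
have Hs1 : all (fun a => a != 0) (nseq (L - size u) 1) by rewrite all_nseq orbT.
have Hs1n : all (fun a => a < n) (nseq (L - size u) 1) by rewrite all_nseq hn orbT.
have Hz : all (fun a => a < n) (nseq (L - size u) 0) by rewrite all_nseq Hn0 orbT.
set t := u ++ nseq (L - size u) 1.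
have Ht : size t = L by rewrite size_cat size_nseq; lia.
have E1 : Ad k (p ++ nseq L 0) (p ++ t).
  rewrite -{1}Ht; apply: Ad_fill; first by rewrite Ht.
    by rewrite Ht; lia.
  by rewrite all_cat Hun0.
have E2 : Ad k (p ++ t) ((p ++ u) ++ nseq (L - size u) 0).
  rewrite Ad_sym /t catA.
  have := @Ad_fill k (p ++ u) (nseq (L - size u) 1); rewrite size_nseq; apply => //.
    by rewrite size_cat; lia.
  by lia.
have V1 : valid (p ++ t).
  rewrite /valid size_cat Ht Hk eqxx all_cat Hp /t all_cat Hun Hs1n.
  by [].
have V2 : valid ((p ++ u) ++ nseq (L - size u) 0).
  rewrite /valid !size_cat size_nseq !all_cat Hp Hun Hz andbT.
  rewrite /= andbT; apply/eqP; move: Hk HL Hu0; clear; lia.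
have E3 : (p ++ u) ++ nseq (L - size u) 0 = (p ++ rcons u 0) ++ nseq (size w3) 0.
  have -> : L - size u = (size w3).+1 by move: HL; clear; lia.
  by rewrite -!catA /= cat_rcons.
have IH3 : sw (size w3) ((p ++ rcons u 0) ++ nseq (size w3) 0) ((p ++ rcons u 0) ++ w3).
  apply: IH => //.
  - by move: HL Hu0; clear; lia.
  - by rewrite size_cat size_rcons; move: HL Hk; clear; lia.
  - by rewrite all_cat all_rcons Hp Hun Hn0.
rewrite -E3 in IH3.
apply: (sw_mono (m := 1 + (1 + size w3))); first by move: HL Hu0; clear; lia.
apply: sw_trans (sw_edge E1 V1) _.
apply: sw_trans (sw_edge E2 V2) _.
by rewrite catA.
Qed.
End SW.

Definition ty (u : seq nat) j := nth 0 u j != 0.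
Definition cc (u : seq nat) j := ty u j != (if j is j'.+1 then ty u j' else false).
Definition Ham k u v := \sum_(j < k) (cc u j != cc v j : nat).

Lemma Ham_tri k u v w : Ham k u w <= Ham k u v + Ham k v w.
Proof.
rewrite /Ham -big_split /=; apply: leq_sum => j _.
by case: (cc u j); case: (cc v j); case: (cc w j).
Qed.

Lemma Ham_sym k u v : Ham k u v = Ham k v u.
Proof. by apply: eq_bigr => j _; rewrite eq_sym. Qed.

Lemma sum_eqa k a : \sum_(j < k) (val j == a : nat) = (a < k).
Proof.
elim: k => [|k IH]; first by rewrite big_ord0.
rewrite big_ord_recr /= IH; case: (ltngtP a k) => H.
- by rewrite ltnS ltnW.
- by rewrite ltnS leqNgt H.
- by rewrite H ltnSn.
Qed.

Definition pat k u v := exists a D, forall j, j < k -> (ty u j != ty v j) = (a <= j) && D.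

Lemma pat_Ham k u v : pat k u v -> Ham k u v <= 1.
Proof.
move=> [a [D H]].
apply: (@leq_trans (\sum_(j < k) (val j == a : nat))); last by rewrite sum_eqa; case: (a < k).
apply: leq_sum => -[j Hj] _ /=.
have Hb : forall x y x' y' : bool, ((x != x') != (y != y')) = ((x != y) != (x' != y')).
  by case; case; case; case.
rewrite /cc Hb H //; case: j Hj => [|j] Hj.
  by case: a {H} => [|a]; case: D.
rewrite H; last by apply: ltnW.
clear H; case: D; rewrite ?andbT ?andbF //.
case: (ltngtP a j.+1) => Ha.
- by rewrite ltnS in Ha; rewrite Ha.
- have -> : (a <= j) = false by apply/negbTE; rewrite -ltnNge; apply: ltn_trans (ltnSn j) Ha.
  by [].
- by case: (a <= j).
Qed.

Lemma take_nth_eq m (u v : seq nat) j : take m u = take m v -> j < m -> nth 0 u j = nth 0 v j.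
Proof. by move=> H Hj; rewrite -(nth_take 0 Hj) H nth_take. Qed.

Lemma pat_sym k u v : pat k u v -> pat k v u.
Proof. by move=> [a [D H]]; exists a, D => j Hj; rewrite eq_sym H. Qed.

Lemma R1_pat k u v : R1 k u v -> pat k u v.
Proof.
move=> /eqP H; exists k.-1, (ty u k.-1 != ty v k.-1) => j Hj.
case: (ltnP j k.-1) => Hjk.
  by rewrite /ty (take_nth_eq H Hjk) eqxx.
have -> : j = k.-1 by move: Hj Hjk; clear; lia.
by [].
Qed.

Lemma R2_pat k u v : size v = k -> R2 k u v -> pat k u v.
Proof.
move=> Hv /existsP[[i Hi] /andP[/eqP Hu Hall]] /=. move: Hu Hall => /= Hu Hall.
exists i, true => j Hj; rewrite andbT Hu /ty nth_cat size_takel; last by rewrite Hv; move: (Hi); clear; lia.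
case: (ltnP j i) => Hji.
  by rewrite nth_take // eqxx.
rewrite nth_nseq; have -> : j - i < k - i by move: Hj Hji; clear; lia.
rewrite eqxx /=.
have Hm : nth 0 v j \in drop i v.
  have -> : nth 0 v j = nth 0 (drop i v) (j - i) by rewrite nth_drop subnKC.
  by apply: mem_nth; rewrite size_drop Hv; move: Hj Hji; clear; lia.
by move/allP: Hall => /(_ _ Hm) ->.
Qed.

Lemma R3_pat k u v : size u = k -> size v = k -> R3 k u v -> pat k u v.
Proof.
move=> Hu Hv /existsP[[i Hi] /and5P[/= Hi0 /eqP Ht Hu0 Hv0 /and3P[_ /eqP Hdu /eqP Hdv]]].
exists 0, false => j Hj; rewrite andbF /ty.
case: (ltngtP j i.-1) => Hji.
- by rewrite (take_nth_eq Ht Hji) eqxx.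
- have E : forall w : seq nat, drop i w = nseq (k - i) 0 -> nth 0 w j = 0.
    move=> w Hw; have -> : nth 0 w j = nth 0 (drop i w) (j - i).
      by rewrite nth_drop subnKC //; move: (Hji) (Hi0); clear; lia.
    by rewrite Hw nth_nseq; case: ifP.
  by rewrite (E _ Hdu) (E _ Hdv).
- by rewrite Hji Hu0 Hv0.
Qed.

Lemma Ad_Ham k u v : size u = k -> size v = k -> Ad k u v -> Ham k u v <= 1.
Proof.
move=> Hu Hv /andP[_ /or4P[H|H|H|H]]; apply: pat_Ham.
- exact: R1_pat.
- exact: R2_pat.
- by apply: pat_sym; apply: R2_pat.
- exact: R3_pat.
Qed.

Lemma Ad_cross k u v : size u = k -> size v = k -> 1 < k -> Ad k u v ->
  ~~ ty u 0 -> ty v 0 -> forall j, j < k -> ~~ ty u j && ty v j.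
Proof.
move=> Hu Hv Hk /andP[_ /or4P[H|H|H|H]] Hu0 Hv0.
- exfalso; move/eqP: H => H.
  have Hk1 : 0 < k.-1 by move: (Hk); clear; lia.
  by move: Hu0 Hv0; rewrite /ty (take_nth_eq H Hk1) => /negPf ->.
- move: H => /existsP[[i Hi] /andP[/eqP /= E Hall]] /=.
  case: i Hi E Hall => [|i] Hi E Hall.
    move=> j Hj; rewrite take0 drop0 /= in E Hall; rewrite /ty E nth_nseq if_same eqxx /=.
    by move/allP: Hall; apply; apply: mem_nth; rewrite Hv.
  exfalso; move: Hu0 Hv0; rewrite /ty E nth_cat size_takel; last by rewrite Hv; move: (Hi); clear; lia.
  by rewrite nth_take //= => /negPf ->.
- move: H => /existsP[[i Hi] /andP[/eqP /= E Hall]] /=.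
  case: i Hi E Hall => [|i] Hi E Hall.
    by exfalso; rewrite take0 /= in E; move: Hv0; rewrite /ty E nth_nseq if_same.
  exfalso; move: Hu0 Hv0; rewrite /ty E nth_cat size_takel; last by rewrite Hu; move: (Hi); clear; lia.
  by rewrite nth_take //= => /negPf ->.
- exfalso; move: H => /existsP[[i Hi] /and5P[/= Hi0 /eqP Ht Hu1 Hv1 _]].
  case: i Hi Hi0 Ht Hu1 Hv1 => [|[|i]] //= Hi _ Ht Hu1 Hv1.
    by move: Hu0; rewrite /ty Hu1.
  by move: Hu0 Hv0; rewrite /ty (take_nth_eq Ht (_ : 0 < i.+1)) // => /negPf->.
Qed.

Lemma Ham_all k u v : (forall j, j < k -> cc u j != cc v j) -> Ham k u v = k.
Proof.
move=> H; rewrite /Ham (eq_bigr (fun _ => 1)); first by rewrite sum_nat_const card_ord muln1.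
by move=> [j Hj] _; rewrite H.
Qed.

Lemma Ham_tail k u v : (forall j, 0 < j -> j < k -> cc u j != cc v j) -> k.-1 <= Ham k u v.
Proof.
case: k => [|k] H //; rewrite /Ham big_ord_recl /=.
apply: leq_trans (leq_addl _ _).
rewrite -[X in X <= _](card_ord k) -sum1_card; apply: leq_sum => -[i Hi] _ /=.
by rewrite H.
Qed.

Lemma exp_bound m k : 1 < m -> (2 * k).-1 < m ^ k.
Proof.
move=> Hm; case: k => [|k]; first by rewrite expn0.
apply: (@leq_trans (2 ^ k.+1)); last by rewrite leq_exp2r.
elim: k => [|k IH] //.
rewrite expnS; move: IH; have := expn_gt0 2 k.+1; lia.
Qed.

Section T.
Variables (n' k : nat).
Local Notation n := n'.+1.
Local Notation T := (k.-tuple 'I_n).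

Definition mv (x : T) : seq nat := map val x.

Lemma mv_size x : size (mv x) = k.
Proof. by rewrite size_map size_tuple. Qed.

Lemma mv_valid x : valid n k (mv x).
Proof.
rewrite /valid mv_size eqxx /=; apply/allP => a /mapP[b _ ->]; exact: ltn_ord.
Qed.

Lemma mv_inj : injective mv.
Proof. by move=> x y /(inj_map val_inj) H; apply: val_inj. Qed.

Lemma Hadj_Ad x y : Hadj n k x y = Ad k (mv x) (mv y).
Proof. by rewrite /Hadj /Ad (inj_eq mv_inj). Qed.

Lemma path_Ham x p : path (Hadj n k) x p -> Ham k (mv x) (mv (last x p)) <= size p.
Proof.
elim: p x => [|a p IH] x /=; first by rewrite /Ham big1 // => j _; rewrite eqxx.
move=> /andP[Ha Hp]; apply: leq_trans (Ham_tri _ _ (mv a) _) _.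
rewrite -[(size p).+1]add1n leq_add //; last exact: IH.
by apply: Ad_Ham; rewrite ?mv_size // -Hadj_Ad.
Qed.

Lemma Ham_gdist x y : Ham k (mv x) (mv y) <= #|{:T}| ->
  Ham k (mv x) (mv y) <= gdist (Hadj n k) x y.
Proof.
move=> H; apply: gdist_ge => // j /walkbP[p [<- Hp <-]]; exact: path_Ham.
Qed.

Definition mk (s : seq nat) : T := [tuple (inord (nth 0 s i) : 'I_n) | i < k].

Lemma mv_mk s : valid n k s -> mv (mk s) = s.
Proof.
move=> /andP[/eqP Hs Hall].
apply: (@eq_from_nth _ 0) => [|i Hi]; first by rewrite mv_size.
rewrite mv_size in Hi.
rewrite /mv (nth_map (inord 0)) ?size_tuple //.
have := tnth_mktuple (fun i : 'I_k => (inord (nth 0 s i) : 'I_n)) (Ordinal Hi).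
rewrite (tnth_nth (inord 0)) /= => ->.
rewrite inordK //.
by move/allP: Hall; apply; apply: mem_nth; rewrite Hs.
Qed.

Lemma mk_mv x : mk (mv x) = x.
Proof. by apply: mv_inj; apply: mv_mk; apply: mv_valid. Qed.

Lemma sw_path x s : all (valid n k) s -> path (Ad k) (mv x) s -> path (Hadj n k) x (map mk s).
Proof.
elim: s x => [|b s IH] x //= /andP[Hb Hs] /andP[H1 H2].
rewrite Hadj_Ad mv_mk // H1 /=; apply: IH => //; rewrite mv_mk //.
Qed.

Lemma sw_gdist m x y : sw n k m (mv x) (mv y) -> m < #|{:T}| -> gdist (Hadj n k) x y <= m.
Proof.
move=> [s [Hs Hp Hl Hv]] Hm.
apply: (@leq_trans (size s)) => //.
apply: gdist_le; first by apply: leq_ltn_trans Hm.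
apply/walkbP; exists (map mk s); split; first by rewrite size_map.
  exact: sw_path.
by rewrite -{1}(mk_mv x) last_map Hl mk_mv.
Qed.

Definition mkty (f : nat -> bool) : T := mk [seq (f j : nat) | j <- iota 0 k].

Lemma ty_mkty f j : 0 < n' -> j < k -> ty (mv (mkty f)) j = f j.
Proof.
move=> hn Hj; rewrite mv_mk; last first.
  rewrite /valid size_map size_iota eqxx /=.
  by apply/allP => a /mapP[b _ ->]; case: (f b).
by rewrite /ty (nth_map 0) ?size_iota // nth_iota // add0n; case: (f j).
Qed.

End T.

Lemma split_cross (U : Type) (e : rel U) (P : pred U) x p :
  path e x p -> P x -> ~~ P (last x p) ->
  exists p1 v p2, [/\ p = p1 ++ v :: p2, P (last x p1) & ~~ P v].
Proof.
elim: p x => [|a p IH] x /=; first by move=> _ ->.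
move=> /andP[_ Hp] Hx Hl; case: (boolP (P a)) => Ha.
  have [p1 [v [p2 [E H1 H2]]]] := IH a Hp Ha Hl.
  by exists (a :: p1), v, p2; rewrite E.
by exists [::], a, p.
Qed.

Lemma half_walk n k (x : seq nat) : 1 < n -> 0 < k -> valid n k x ->
  sw n k k.-1 (nth 0 x 0 :: nseq k.-1 0) x.
Proof.
move=> hn hk /andP[/eqP Hs Hall].
case: x Hs Hall => [|a x] Hs; first by rewrite -Hs in hk.
move=> /= /andP[Ha Hall]; move: Hs => /= Hs.
have := @fill_walk n k hn k.-1 [:: a] x; rewrite /=; apply => //.
- by rewrite -Hs.
- by rewrite -Hs.
- by rewrite Ha.
Qed.

Lemma zvalid n k a : 0 < n -> 0 < k -> a < n -> valid n k (a :: nseq k.-1 0).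
Proof.
move=> hn hk ha; rewrite /valid /= size_nseq ha all_nseq hn orbT andbT.
by rewrite andbT; case: k hk.
Qed.

Lemma bigmin_le (I : eqType) (s : seq I) (P : pred I) (F : I -> nat) d j :
  j \in s -> P j -> \big[minn/d]_(i <- s | P i) F i <= F j.
Proof.
elim: s => [|a s IH] //; rewrite inE big_cons => /orP[/eqP <-|Hj] Hp.
  by rewrite Hp geq_minl.
case: (P a); last exact: IH.
by apply: leq_trans (geq_minr _ _) (IH Hj Hp).
Qed.

Unset Implicit Arguments. Set Strict Implicit.

Theorem mainTheorem4 (n k : nat) (hn : 2 <= n) (hk : 1 <= k)
    (r : k.-tuple 'I_n) (hr : forall j : 'I_k, val (tnth r j) = 0) :
  [/\ ecc (Hadj n k) r = k,
      radius (Hadj n k) = k &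
      diameter (Hadj n k) = (2 * k).-1].
Proof.
case: n hn r hr => [|n'] // hn r hr.
have hn' : 0 < n' by [].
have hn1 : 1 < n'.+1 by [].
have Hcard : #|{: k.-tuple 'I_n'.+1}| = n'.+1 ^ k by rewrite card_tuple card_ord.
have Hbig : (2 * k).-1 < #|{: k.-tuple 'I_n'.+1}| by rewrite Hcard exp_bound.
have Hkc : k < #|{: k.-tuple 'I_n'.+1}|.
  by apply: leq_ltn_trans Hbig; move: hk; clear; lia.
have mvr : mv r = nseq k 0.
  apply: (@eq_from_nth _ 0) => [|i Hi]; first by rewrite mv_size size_nseq.
  rewrite mv_size in Hi; rewrite nth_nseq Hi /mv (nth_map (ord0 : 'I_n'.+1)) ?size_tuple //.
  by have := hr (Ordinal Hi); rewrite (tnth_nth ord0).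
pose flip (x : k.-tuple 'I_n'.+1) := mkty n' k (fun j => ty (mv x) j != ~~ odd j).
have Hflip : forall x, Ham k (mv x) (mv (flip x)) = k.
  move=> x; apply: Ham_all => j Hj; rewrite /cc /flip.
  case: j Hj => [|j] Hj; rewrite !ty_mkty //; last by apply: ltnW.
    by case: (ty (mv x) 0).
  by rewrite /=; case: (ty (mv x) j.+1); case: (ty (mv x) j); case: (odd j).
have Hlow : forall x, k <= ecc (Hadj n'.+1 k) x.
  move=> x; rewrite /ecc; apply: (leq_trans _ (@leq_bigmax _ _ (flip x))).
  rewrite -{1}(Hflip x); apply: Ham_gdist; rewrite Hflip; exact: ltnW.
have Hup : forall x, gdist (Hadj n'.+1 k) r x <= k.
  move=> x; apply: sw_gdist => //.
  rewrite mvr; have := @fill_walk n'.+1 k hn1 k [::] (mv x); apply => //.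
  - by rewrite mv_size.
  - by case/andP: (mv_valid x).
have Hecc : ecc (Hadj n'.+1 k) r = k.
  apply/eqP; rewrite eqn_leq Hlow andbT; apply/bigmax_leqP => x _; exact: Hup.
have Hd : forall x y, gdist (Hadj n'.+1 k) x y <= (2 * k).-1.
  move=> x y; apply: sw_gdist => //.
  have Hx := @half_walk n'.+1 k (mv x) hn1 hk (mv_valid x).
  have Hy := @half_walk n'.+1 k (mv y) hn1 hk (mv_valid y).
  set a := nth 0 (mv x) 0 in Hx *; set b := nth 0 (mv y) 0 in Hy *.
  have Ha : a < n'.+1.
    by case/andP: (mv_valid x) => _ /allP; apply; apply: mem_nth; rewrite mv_size.
  have Hb : b < n'.+1.
    by case/andP: (mv_valid y) => _ /allP; apply; apply: mem_nth; rewrite mv_size.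
  have Vx := @zvalid n'.+1 k a (isT : 0 < n'.+1) hk Ha.
  have Vy := @zvalid n'.+1 k b (isT : 0 < n'.+1) hk Hb.
  have Hx' := sw_sym Vx Hx.
  have Z : 0 :: nseq k.-1 0 = nseq k 0 by case: k hk {Hcard Hbig Hkc mvr flip Hflip Hlow Hup Hecc Hx Hy Vx Vy Hx' r hr x y a b Ha Hb}.
  have H0 : forall z : k.-tuple 'I_n'.+1, sw n'.+1 k k (nseq k 0) (mv z).
    move=> z; have := @fill_walk n'.+1 k hn1 k [::] (mv z); apply => //.
    - by rewrite mv_size.
    - by case/andP: (mv_valid z).
  have V0 : valid n'.+1 k (nseq k 0) by rewrite -Z zvalid.
  case: (eqVneq a b) => Hab.
    apply: (sw_mono (m := k.-1 + k.-1)); first by move: hk; clear; lia.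
    by apply: sw_trans Hx' _; rewrite Hab.
  case: (eqVneq a 0) => Ha0.
    apply: (sw_mono (m := k.-1 + k)); first by move: hk; clear; lia.
    by rewrite Ha0 Z in Hx'; apply: sw_trans Hx' (H0 y).
  case: (eqVneq b 0) => Hb0.
    apply: (sw_mono (m := k + k.-1)); first by move: hk; clear; lia.
    rewrite Hb0 Z in Hy; apply: sw_trans _ Hy.
    exact: sw_sym V0 (H0 x).
  apply: (sw_mono (m := k.-1 + 1 + k.-1)); first by move: hk; clear; lia.
  apply: sw_trans _ Hy; apply: sw_trans Hx' _.
  by apply: sw_edge Vy; apply: Ad_R3.
split => //.
- apply/eqP; rewrite eqn_leq; apply/andP; split.
    apply: (@leq_trans (ecc (Hadj n'.+1 k) r)); last by rewrite Hecc.
    by apply: bigmin_le; rewrite ?mem_index_enum.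
  apply: (big_ind (fun m => k <= m)) => //.
  + exact: ltnW.
  + by move=> p q Hp Hq; rewrite leq_min Hp.
- apply/eqP; rewrite eqn_leq; apply/andP; split.
    apply/bigmax_leqP => x _; apply/bigmax_leqP => y _; exact: Hd.
  case: (ltnP 1 k) => Hk2; last first.
    have -> : (2 * k).-1 = k by move: hk Hk2; clear; lia.
    apply: (@leq_trans (ecc (Hadj n'.+1 k) r)); first by rewrite Hecc.
    exact: (@leq_bigmax _ (fun x => ecc (Hadj n'.+1 k) x) r).
  pose x0 := mkty n' k odd.
  pose y0 := mkty n' k (fun j => ~~ odd j).
  apply: (@leq_trans (ecc (Hadj n'.+1 k) x0)); last exact: (@leq_bigmax _ (fun x => ecc (Hadj n'.+1 k) x) x0).
  apply: (@leq_trans (gdist (Hadj n'.+1 k) x0 y0)); last exact: (@leq_bigmax _ _ y0).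
  apply: gdist_ge; first exact: ltnW.
  move=> j /walkbP[p [<- Hp Hl]].
  have Hx0 : ~~ ty (mv x0) 0 by rewrite ty_mkty.
  have Hy0 : ~~ ~~ ty (mv (last x0 p)) 0 by rewrite Hl ty_mkty.
  have [p1 [v [p2 [E H1 H2]]]] := split_cross (P := fun t : k.-tuple 'I_n'.+1 => ~~ ty (mv t) 0) Hp Hx0 Hy0.
  move: Hp; rewrite E cat_path /= => /and3P[Hp1 Huv Hp2].
  rewrite E last_cat /= in Hl.
  have Huv' : Ad k (mv (last x0 p1)) (mv v) by rewrite -Hadj_Ad.
  have Hc := Ad_cross (mv_size _) (mv_size _) Hk2 Huv' H1 (negbNE H2).
  have L1 := path_Ham Hp1.
  have L2 := path_Ham Hp2; rewrite Hl in L2.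
  have M1 : k.-1 <= Ham k (mv x0) (mv (last x0 p1)).
    apply: Ham_tail => i Hi0 Hik; rewrite /cc.
    case: i Hi0 Hik => [//|i] _ Hik.
    rewrite !ty_mkty //; last exact: ltnW.
    have /andP[/negbTE -> _] := Hc _ Hik; have /andP[/negbTE -> _] := Hc _ (ltnW Hik).
    by rewrite /=; case: (odd i).
  have M2 : k.-1 <= Ham k (mv v) (mv y0).
    apply: Ham_tail => i Hi0 Hik; rewrite /cc.
    case: i Hi0 Hik => [//|i] _ Hik.
    rewrite !ty_mkty //; last exact: ltnW.
    have /andP[_ ->] := Hc _ Hik; have /andP[_ ->] := Hc _ (ltnW Hik).
    by rewrite /=; case: (odd i).
  rewrite size_cat /=.
  move: (leq_trans M1 L1) (leq_trans M2 L2); clear; lia.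
Qed.
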